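(* Let $\epsilon_1,\epsilon_2,\epsilon_3,\epsilon_4\in\{\pm1\}$, let $\Lambda(x)$ and ${}^v\Lambda(x,y^4)$ be smooth functions of $x=(x^1,x^2)$, resp. $(x,y^4)$, and let $\widetilde\Lambda_0\neq0$ be a constant. Let $\tilde\Phi(x,y^4)>0$ be smooth with $\partial_4\tilde\Phi\neq0$, and let $\Xi(x,y^4)$ satisfy $\partial_4\Xi={}^v\Lambda\,\partial_4(\tilde\Phi^2)$ with $\Xi\neq0$ and $\partial_4\Xi\neq0$ everywhere. Let $\psi(x)$ be any solution of $\epsilon_1\partial^2_{11}\psi+\epsilon_2\partial^2_{22}\psi=2\Lambda(x)$, and let ${}_1n_k(x)$, ${}_2\tilde n_k(x)$ ($k=1,2$) be arbitrary smooth functions. Define $$h_3=\frac{\tilde\Phi^2}{4\widetilde\Lambda_0},\quad h_4=\frac{(\partial_4\tilde\Phi)^2}{\Xi},\quad n_k={}_1n_k+{}_2\tilde n_k\int\frac{(\partial_4\tilde\Phi)^2}{\tilde\Phi^3\,\Xi}\,dy^4,\quad w_i=\frac{\partial_i\Xi}{\partial_4\Xi}.$$ Then $(\psi,h_3,h_4,n_k,w_i)$ solves the system $$\epsilon_1\partial^2_{11}\psi+\epsilon_2\partial^2_{22}\psi=2\Lambda,\quad (\partial_4\phi)(\partial_4h_3)=2h_3h_4\,{}^v\Lambda,\quad \partial^2_{44}n_i+\gamma\,\partial_4n_i=0,\quad \beta w_i-\alpha_i=0,$$ where $\phi=\ln|\partial_4h_3/\sqrt{|h_3h_4|}|$, $\gamma=\partial_4\ln(|h_3|^{3/2}/|h_4|)$,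 $\alpha_i=(\partial_i\phi)(\partial_4h_3)/(2h_3)$, $\beta=(\partial_4\phi)(\partial_4h_3)/(2h_3)$. Consequently the metric $$ds^2=\epsilon_ie^{\psi}(dx^i)^2+\frac{\tilde\Phi^2}{4\widetilde\Lambda_0}\Big[dy^3+n_k dx^k\Big]^2+\frac{(\partial_4\tilde\Phi)^2}{\Xi}\Big[dy^4+\frac{\partial_i\Xi}{\partial_4\Xi}dx^i\Big]^2$$ is a generic off-diagonal solution, with Killing symmetry $\partial/\partial y^3$, of the decoupled 4-d nonholonomic Einstein equations for the canonical d-connection with sources $\Lambda$, ${}^v\Lambda$.
   Context: Coordinates $(x^1,x^2,y^3,y^4)$, $\partial_i=\partial/\partial x^i$, $\partial_4=\partial/\partial y^4$; summation over $i,k=1,2$. $\int\cdot\,dy^4$ denotes any antiderivative with respect to $y^4$ (with $x$ fixed). The ''decoupled 4-d nonholonomic Einstein equations'' are exactly the displayed system of four equations for the metric $ds^2=\epsilon_ie^\psi(dx^i)^2+h_3(dy^3+n_kdx^k)^2+h_4(dy^4+w_idx^i)^2$ with $h_a,n_k,w_i$ functions of $(x,y^4)$. *)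

(* Defs.v *)
From Stdlib Require Import Reals Lra ClassicalEpsilon.
Open Scope R_scope.

(* Functions of the coordinates (x^1, x^2, y^4) (no dependence on y^3). *)
Definition F3 := R -> R -> R -> R.

Definition lift2 (g : R -> R -> R) : F3 := fun a b _ => g a b.

(* Partial derivatives d_1, d_2, d_4 (value of the derivative; chosen by
   classical description, so it is the true derivative whenever it exists). *)
Definition D1 (f : F3) : F3 := fun a b c =>
  epsilon (inhabits 0) (fun l => derivable_pt_lim (fun t => f t b c) a l).
Definition D2 (f : F3) : F3 := fun a b c =>
  epsilon (inhabits 0) (fun l => derivable_pt_lim (fun t => f a t c) b l).
Definition D4 (f : F3) : F3 := fun a b c =>
  epsilon (inhabits 0) (fun l => derivable_pt_lim (fun t => f a b t) c l).

Definition ex_D1 (f : F3) a b c := exists l, derivable_pt_lim (fun t => f t b c) a l.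
Definition ex_D2 (f : F3) a b c := exists l, derivable_pt_lim (fun t => f a t c) b l.
Definition ex_D4 (f : F3) a b c := exists l, derivable_pt_lim (fun t => f a b t) c l.

Definition cont3 (f : F3) : Prop :=
  forall a b c eps, 0 < eps -> exists delta, 0 < delta /\
    forall a' b' c', Rabs (a' - a) < delta -> Rabs (b' - b) < delta ->
      Rabs (c' - c) < delta -> Rabs (f a' b' c' - f a b c) < eps.

Fixpoint Ck (k : nat) (f : F3) : Prop :=
  match k with
  | O => cont3 f
  | S k' => cont3 f /\
      (forall a b c, ex_D1 f a b c /\ ex_D2 f a b c /\ ex_D4 f a b c) /\
      Ck k' (D1 f) /\ Ck k' (D2 f) /\ Ck k' (D4 f)
  end.

Definition smooth (f : F3) : Prop := forall k, Ck k f.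

Definition phi_of (h3 h4 : F3) : F3 := fun a b c =>
  ln (Rabs (D4 h3 a b c / sqrt (Rabs (h3 a b c * h4 a b c)))).
Definition gamma_of (h3 h4 : F3) : F3 :=
  D4 (fun a b c => ln (Rpower (Rabs (h3 a b c)) (3/2) / Rabs (h4 a b c))).
Definition alpha1_of (h3 h4 : F3) : F3 := fun a b c =>
  D1 (phi_of h3 h4) a b c * D4 h3 a b c / (2 * h3 a b c).
Definition alpha2_of (h3 h4 : F3) : F3 := fun a b c =>
  D2 (phi_of h3 h4) a b c * D4 h3 a b c / (2 * h3 a b c).
Definition beta_of (h3 h4 : F3) : F3 := fun a b c =>
  D4 (phi_of h3 h4) a b c * D4 h3 a b c / (2 * h3 a b c).

(* The decoupled 4-d nonholonomic Einstein equations for the metric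
   ds^2 = eps_i e^psi (dx^i)^2 + h3 (dy^3 + n_k dx^k)^2 + h4 (dy^4 + w_i dx^i)^2,
   together with the nondegeneracy and the existence of all derivatives used. *)
Definition decoupled_einstein (eps1 eps2 : R) (Lam vLam psi h3 h4 n1 n2 w1 w2 : F3)
  : Prop :=
  forall a b c,
    h3 a b c <> 0 /\ h4 a b c <> 0 /\ D4 h3 a b c <> 0 /\
    ex_D1 psi a b c /\ ex_D1 (D1 psi) a b c /\
    ex_D2 psi a b c /\ ex_D2 (D2 psi) a b c /\
    ex_D4 h3 a b c /\
    ex_D1 (phi_of h3 h4) a b c /\ ex_D2 (phi_of h3 h4) a b c /\
    ex_D4 (phi_of h3 h4) a b c /\
    ex_D4 (fun a b c => ln (Rpower (Rabs (h3 a b c)) (3/2) / Rabs (h4 a b c))) a b c /\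
    ex_D4 n1 a b c /\ ex_D4 (D4 n1) a b c /\
    ex_D4 n2 a b c /\ ex_D4 (D4 n2) a b c /\
    eps1 * D1 (D1 psi) a b c + eps2 * D2 (D2 psi) a b c = 2 * Lam a b c /\
    D4 (phi_of h3 h4) a b c * D4 h3 a b c = 2 * h3 a b c * h4 a b c * vLam a b c /\
    D4 (D4 n1) a b c + gamma_of h3 h4 a b c * D4 n1 a b c = 0 /\
    D4 (D4 n2) a b c + gamma_of h3 h4 a b c * D4 n2 a b c = 0 /\
    beta_of h3 h4 a b c * w1 a b c - alpha1_of h3 h4 a b c = 0 /\
    beta_of h3 h4 a b c * w2 a b c - alpha2_of h3 h4 a b c = 0.

(* Main.v *)
Require Import Defs.
From Stdlib Require Import Reals Lra FunctionalExtensionality ClassicalEpsilon.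
From Coquelicot Require Import Coquelicot.
Open Scope R_scope.

Lemma D1_unique f a b c l : derivable_pt_lim (fun t => f t b c) a l -> D1 f a b c = l.
Proof. intro H. unfold D1. apply (uniqueness_limite (fun t => f t b c) a).
  - apply (epsilon_spec (inhabits 0) (fun l => derivable_pt_lim (fun t => f t b c) a l)). now exists l.
  - exact H. Qed.
Lemma D2_unique f a b c l : derivable_pt_lim (fun t => f a t c) b l -> D2 f a b c = l.
Proof. intro H. unfold D2. apply (uniqueness_limite (fun t => f a t c) b).
  - apply (epsilon_spec (inhabits 0) (fun l => derivable_pt_lim (fun t => f a t c) b l)). now exists l.
  - exact H. Qed.
Lemma D4_unique f a b c l : derivable_pt_lim (fun t => f a b t) c l -> D4 f a b c = l.
Proof. intro H. unfold D4. apply (uniqueness_limite (fun t => f a b t) c).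
  - apply (epsilon_spec (inhabits 0) (fun l => derivable_pt_lim (fun t => f a b t) c l)). now exists l.
  - exact H. Qed.

Lemma Der1 f a b c : ex_D1 f a b c -> Derive (fun t => f t b c) a = D1 f a b c.
Proof. intros [l H]. rewrite (D1_unique _ _ _ _ _ H). apply is_derive_unique, is_derive_Reals, H. Qed.
Lemma Der2 f a b c : ex_D2 f a b c -> Derive (fun t => f a t c) b = D2 f a b c.
Proof. intros [l H]. rewrite (D2_unique _ _ _ _ _ H). apply is_derive_unique, is_derive_Reals, H. Qed.
Lemma Der4 f a b c : ex_D4 f a b c -> Derive (fun t => f a b t) c = D4 f a b c.
Proof. intros [l H]. rewrite (D4_unique _ _ _ _ _ H). apply is_derive_unique, is_derive_Reals, H. Qed.
Lemma exd1 f a b c : ex_D1 f a b c -> ex_derive (fun t => f t b c) a.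
Proof. intros [l H]. exists l. apply is_derive_Reals, H. Qed.
Lemma exd2 f a b c : ex_D2 f a b c -> ex_derive (fun t => f a t c) b.
Proof. intros [l H]. exists l. apply is_derive_Reals, H. Qed.
Lemma exd4 f a b c : ex_D4 f a b c -> ex_derive (fun t => f a b t) c.
Proof. intros [l H]. exists l. apply is_derive_Reals, H. Qed.
Lemma ex_of (g : R -> R) x : ex_derive g x -> exists l, derivable_pt_lim g x l.
Proof. intros [l H]. exists l. apply is_derive_Reals, H. Qed.

Lemma sm_ex f : smooth f -> forall a b c, ex_D1 f a b c /\ ex_D2 f a b c /\ ex_D4 f a b c.
Proof. intros H. destruct (H 1%nat) as [_ [H1 _]]. exact H1. Qed.
Lemma sm_D1 f : smooth f -> smooth (D1 f).
Proof. intros H k. destruct (H (S k)) as [_ [_ [h _]]]. exact h. Qed.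
Lemma sm_D2 f : smooth f -> smooth (D2 f).
Proof. intros H k. destruct (H (S k)) as [_ [_ [_ [h _]]]]. exact h. Qed.
Lemma sm_D4 f : smooth f -> smooth (D4 f).
Proof. intros H k. destruct (H (S k)) as [_ [_ [_ [_ h]]]]. exact h. Qed.

Lemma ln_abs_sq y : y <> 0 -> ln (Rabs y) = ln (y ^ 2) / 2.
Proof. intro Hy. rewrite <- pow2_abs. rewrite ln_pow by (apply Rabs_pos_lt; exact Hy).
  simpl INR. field. Qed.
Ltac nz := repeat match goal with
 | |- ?x * ?y <> 0 => apply Rmult_integral_contrapositive_currified
 | |- ?x / ?y <> 0 => unfold Rdiv
 | |- / ?x <> 0 => apply Rinv_neq_0_compat
 | |- ?x ^ _ <> 0 => apply pow_nonzero
 end; try lra; auto.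
Lemma pow2_gt_0 x : x <> 0 -> 0 < x ^ 2.
Proof. intro H. replace (x ^ 2) with (Rsqr x) by (unfold Rsqr; ring). apply Rsqr_pos_lt, H. Qed.
Ltac sq := repeat rewrite Rmult_1_r; apply Rsqr_pos_lt; nz.
Theorem theorem3p2
  (eps1 eps2 eps3 eps4 : R)
  (He1 : eps1 = 1 \/ eps1 = -1) (He2 : eps2 = 1 \/ eps2 = -1)
  (He3 : eps3 = 1 \/ eps3 = -1) (He4 : eps4 = 1 \/ eps4 = -1)
  (Lam : R -> R -> R) (vLam : F3) (Lam0 : R)
  (Phi Xi : F3) (psi : R -> R -> R)
  (n1_1 n1_2 n2_1 n2_2 : R -> R -> R) (I : F3)
  (HLam : smooth (lift2 Lam)) (HvLam : smooth vLam) (HLam0 : Lam0 <> 0)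
  (HPhi : smooth Phi) (HPhipos : forall a b c, 0 < Phi a b c)
  (HPhi4 : forall a b c, D4 Phi a b c <> 0)
  (HXi : smooth Xi)
  (HXieq : forall a b c,
     D4 Xi a b c = vLam a b c * D4 (fun a b c => Phi a b c ^ 2) a b c)
  (HXi0 : forall a b c, Xi a b c <> 0)
  (HXi4 : forall a b c, D4 Xi a b c <> 0)
  (Hpsi : smooth (lift2 psi))
  (Hpsieq : forall a b c,
     eps1 * D1 (D1 (lift2 psi)) a b c + eps2 * D2 (D2 (lift2 psi)) a b c
     = 2 * Lam a b)
  (Hn : smooth (lift2 n1_1) /\ smooth (lift2 n1_2) /\
        smooth (lift2 n2_1) /\ smooth (lift2 n2_2))
  (HI : forall a b c, derivable_pt_lim (fun t => I a b t) c
          (D4 Phi a b c ^ 2 / (Phi a b c ^ 3 * Xi a b c))) :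
  let h3 : F3 := fun a b c => Phi a b c ^ 2 / (4 * Lam0) in
  let h4 : F3 := fun a b c => D4 Phi a b c ^ 2 / Xi a b c in
  let n1 : F3 := fun a b c => n1_1 a b + n2_1 a b * I a b c in
  let n2 : F3 := fun a b c => n1_2 a b + n2_2 a b * I a b c in
  let w1 : F3 := fun a b c => D1 Xi a b c / D4 Xi a b c in
  let w2 : F3 := fun a b c => D2 Xi a b c / D4 Xi a b c in
  decoupled_einstein eps1 eps2 (lift2 Lam) vLam (lift2 psi) h3 h4 n1 n2 w1 w2.
Proof.
  intros h3 h4 n1 n2 w1 w2.
  pose proof (sm_ex _ HPhi) as exP.
  pose proof (sm_ex _ (sm_D4 _ HPhi)) as exP4.
  pose proof (sm_ex _ HXi) as exX.
  assert (H3eq : forall a b c, D4 h3 a b c = 2 * Phi a b c * D4 Phi a b c / (4 * Lam0)).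
  { intros a b c. apply D4_unique, is_derive_Reals. unfold h3. auto_derive.
    - apply exd4, exP.
    - rewrite Der4 by apply exP. field. exact HLam0. }
  assert (HP2 : forall a b c, D4 (fun a b c => Phi a b c ^ 2) a b c = 2 * Phi a b c * D4 Phi a b c).
  { intros a b c. apply D4_unique, is_derive_Reals. auto_derive.
    - apply exd4, exP.
    - rewrite Der4 by apply exP. field. }
  assert (Hphi : phi_of h3 h4 = fun a b c => ln (Xi a b c ^ 2) / 4 - ln (Lam0 ^ 2) / 4).
  { apply functional_extensionality; intro a.
    apply functional_extensionality; intro b.
    apply functional_extensionality; intro c.
    unfold phi_of. rewrite H3eq.
    pose proof (HPhipos a b c) as Pp. pose proof (HPhi4 a b c) as P4.
    pose proof (HXi0 a b c) as X0.
    set (B := h3 a b c * h4 a b c).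
    assert (HB : B <> 0) by (unfold B, h3, h4; nz).
    assert (Hs : 0 < sqrt (Rabs B)) by (apply sqrt_lt_R0, Rabs_pos_lt, HB).
    set (r := 2 * Phi a b c * D4 Phi a b c / (4 * Lam0) / sqrt (Rabs B)).
    assert (Hr : r <> 0).
    { unfold r. nz. }
    rewrite ln_abs_sq by exact Hr.
    replace (ln (r ^ 2)) with (ln (Rabs (r ^ 2))) by (rewrite Rabs_pos_eq; [reflexivity | apply pow2_ge_0]).
    rewrite ln_abs_sq by (apply pow_nonzero, Hr).
    replace ((r ^ 2) ^ 2) with (Xi a b c ^ 2 * / (Lam0 ^ 2)).
    2:{ unfold r. replace (((2 * Phi a b c * D4 Phi a b c / (4 * Lam0) / sqrt (Rabs B)) ^ 2) ^ 2)
          with ((2 * Phi a b c * D4 Phi a b c / (4 * Lam0)) ^ 4 / (sqrt (Rabs B) ^ 2) ^ 2)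
          by (field; nz).
        rewrite pow2_sqrt by apply Rabs_pos. rewrite pow2_abs. unfold B, h3, h4.
        field. nz. }
    assert (0 < Xi a b c ^ 2) by (apply pow2_gt_0; exact X0) .
    assert (0 < Lam0 ^ 2) by (apply pow2_gt_0; exact HLam0).
    rewrite ln_mult by (try apply Rinv_0_lt_compat; assumption).
    rewrite ln_Rinv by assumption. field. }
  assert (Hp4 : forall a b c, D4 (phi_of h3 h4) a b c = D4 Xi a b c / (2 * Xi a b c)).
  { intros a b c. rewrite Hphi. apply D4_unique, is_derive_Reals. auto_derive.
    - split. apply exd4, exX. split; [apply pow2_gt_0, HXi0|auto].
    - rewrite Der4 by apply exX. field. apply HXi0. }
  assert (Hp1 : forall a b c, D1 (phi_of h3 h4) a b c = D1 Xi a b c / (2 * Xi a b c)).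
  { intros a b c. rewrite Hphi. apply D1_unique, is_derive_Reals. auto_derive.
    - split. apply exd1, exX. split; [apply pow2_gt_0, HXi0|auto].
    - rewrite Der1 by apply exX. field. apply HXi0. }
  assert (Hp2 : forall a b c, D2 (phi_of h3 h4) a b c = D2 Xi a b c / (2 * Xi a b c)).
  { intros a b c. rewrite Hphi. apply D2_unique, is_derive_Reals. auto_derive.
    - split. apply exd2, exX. split; [apply pow2_gt_0, HXi0|auto].
    - rewrite Der2 by apply exX. field. apply HXi0. }
  assert (HG : (fun a b c => ln (Rpower (Rabs (h3 a b c)) (3/2) / Rabs (h4 a b c))) =
     fun a b c => 3/4 * ln ((Phi a b c ^ 2 / (4 * Lam0)) ^ 2) - 1/2 * ln ((D4 Phi a b c ^ 2 / Xi a b c) ^ 2)).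
  { apply functional_extensionality; intro a.
    apply functional_extensionality; intro b.
    apply functional_extensionality; intro c.
    pose proof (HPhipos a b c) as Pp. pose proof (HPhi4 a b c) as P4.
    pose proof (HXi0 a b c) as X0.
    assert (h3n : h3 a b c <> 0) by (unfold h3; nz).
    assert (h4n : h4 a b c <> 0) by (unfold h4; nz).
    unfold Rdiv at 1. rewrite ln_mult.
    2:{ unfold Rpower. apply exp_pos. }
    2:{ apply Rinv_0_lt_compat, Rabs_pos_lt, h4n. }
    rewrite ln_Rinv by (apply Rabs_pos_lt, h4n).
    unfold Rpower. rewrite ln_exp. rewrite !ln_abs_sq by assumption.
    unfold h3, h4. field. }
  assert (Hgam : forall a b c, gamma_of h3 h4 a b c =
     3 * D4 Phi a b c / Phi a b c - 2 * D4 (D4 Phi) a b c / D4 Phi a b c + D4 Xi a b c / Xi a b c).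
  { intros a b c. unfold gamma_of. rewrite HG.
    pose proof (HPhipos a b c) as Pp. pose proof (HPhi4 a b c) as P4.
    pose proof (HXi0 a b c) as X0.
    apply D4_unique, is_derive_Reals. auto_derive.
    - repeat split; first [apply exd4; first [apply exP | apply exP4 | apply exX] | assumption | sq].
    - rewrite !Der4 by first [apply exP | apply exP4 | apply exX]. field. nz. }
  assert (Hn1 : forall m k : R -> R -> R,
     D4 (fun a b c => m a b + k a b * I a b c) =
     fun a b c => k a b * (D4 Phi a b c ^ 2 / (Phi a b c ^ 3 * Xi a b c))).
  { intros m k.
    apply functional_extensionality; intro a.
    apply functional_extensionality; intro b.
    apply functional_extensionality; intro c.
    apply D4_unique, is_derive_Reals. auto_derive.
    - eexists. apply is_derive_Reals, HI.
    - rewrite (is_derive_unique _ _ _ (proj2 (is_derive_Reals _ _ _) (HI a b c))). ring. }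
  assert (Hex1 : forall m k : R -> R -> R, forall a b c,
     ex_D4 (fun a b c => m a b + k a b * I a b c) a b c).
  { intros m k a b c. apply ex_of. auto_derive. eexists. apply is_derive_Reals, HI. }
  assert (Hex2 : forall m k : R -> R -> R, forall a b c,
     ex_D4 (D4 (fun a b c => m a b + k a b * I a b c)) a b c).
  { intros m k a b c. rewrite Hn1. apply ex_of. 
    pose proof (HPhipos a b c) as Pp. pose proof (HPhi4 a b c) as P4.
    pose proof (HXi0 a b c) as X0.
    auto_derive.
    repeat split; first [apply exd4; first [apply exP | apply exP4 | apply exX] | assumption | nz]. }
  assert (Hnn : forall m k : R -> R -> R, forall a b c,
     D4 (D4 (fun a b c => m a b + k a b * I a b c)) a b c =
     k a b * (D4 Phi a b c ^ 2 / (Phi a b c ^ 3 * Xi a b c)) *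
       (2 * D4 (D4 Phi) a b c / D4 Phi a b c - 3 * D4 Phi a b c / Phi a b c - D4 Xi a b c / Xi a b c)).
  { intros m k a b c. rewrite Hn1.
    pose proof (HPhipos a b c) as Pp. pose proof (HPhi4 a b c) as P4.
    pose proof (HXi0 a b c) as X0.
    apply D4_unique, is_derive_Reals. auto_derive.
    - repeat split; first [apply exd4; first [apply exP | apply exP4 | apply exX] | assumption | nz].
    - rewrite !Der4 by first [apply exP | apply exP4 | apply exX]. field. nz. }
  pose proof (sm_ex _ Hpsi) as exs.
  pose proof (sm_ex _ (sm_D1 _ Hpsi)) as exs1.
  pose proof (sm_ex _ (sm_D2 _ Hpsi)) as exs2.
  unfold decoupled_einstein. intros a b c.
  pose proof (HPhipos a b c) as Pp. pose proof (HPhi4 a b c) as P4.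
  pose proof (HXi0 a b c) as X0. pose proof (HXi4 a b c) as X4.
  assert (h3n : h3 a b c <> 0) by (unfold h3; nz).
  assert (h4n : h4 a b c <> 0) by (unfold h4; nz).
  split; [exact h3n|]. split; [exact h4n|].
  split; [rewrite H3eq; nz|].
  split; [apply exs|]. split; [apply exs1|]. split; [apply exs|]. split; [apply exs2|].
  split; [apply ex_of; unfold h3; auto_derive; apply exd4, exP|].
  split; [rewrite Hphi; apply ex_of; auto_derive; repeat split; first [apply exd1, exX | sq | auto] |].
  split; [rewrite Hphi; apply ex_of; auto_derive; repeat split; first [apply exd2, exX | sq | auto] |].
  split; [rewrite Hphi; apply ex_of; auto_derive; repeat split; first [apply exd4, exX | sq | auto] |].
  split; [rewrite HG; apply ex_of; auto_derive; repeat split;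
     first [apply exd4; first [apply exP | apply exP4 | apply exX] | assumption | sq] |].
  split; [apply Hex1|]. split; [apply Hex2|]. split; [apply Hex1|]. split; [apply Hex2|].
  split; [apply Hpsieq|].
  split; [rewrite Hp4, H3eq, HXieq, HP2; unfold h3, h4; field; nz|].
  split; [unfold n1; rewrite Hnn, Hgam, Hn1; ring|].
  split; [unfold n2; rewrite Hnn, Hgam, Hn1; ring|].
  split; [unfold beta_of, alpha1_of, w1; rewrite Hp4, Hp1, H3eq; unfold h3; field; nz|].
  unfold beta_of, alpha2_of, w2; rewrite Hp4, Hp2, H3eq; unfold h3; field; nz.
Qed.
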